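(* (a) For every $n\ge0$, all roots of $K_n$ are real and lie in $(0,4)$. (b) For every $n\ge3$, all roots of $\mathcal{K}_n$ are real and lie in $[0,4)$; $0$ is a root of multiplicity exactly $\lfloor (n+1)/2\rfloor$, and the remaining $\lfloor n/2\rfloor$ roots are nonzero and simple.
   Context: $K_n(\lambda)$ is defined by $K_0=2$, $K_1=1$, $K_2=\lambda-2$, $K_3=\lambda-3$, $K_{2p+1}=(\lambda-2)K_{2p-1}-K_{2p-3}$, $K_{2p}=(\lambda-2)K_{2p-2}-K_{2p-4}$ ($p\ge2$). $\mathcal{K}_n(\lambda)=\det(\lambda I_n-M_n)$ where $M_n$ is the $n\times n$ matrix with $(M_n)_{j,i}=1$ if $i\ge j-1$ or $(j,i)=(n,n-2)$, and $0$ otherwise. *)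

(* Defs.v *)
From HB Require Import structures.
From mathcomp Require Import all_boot all_order all_algebra all_field.
Set Implicit Arguments. Unset Strict Implicit. Unset Printing Implicit Defensive.
Import Order.TTheory GRing.Theory Num.Theory.
Local Open Scope ring_scope.

Fixpoint Kpoly (n : nat) : {poly algC} :=
  match n with
  | 0 => 2%:P
  | 1 => 1
  | 2 => 'X - 2%:P
  | 3 => 'X - 3%:P
  | S (S ((S (S m)) as k)) => ('X - 2%:P) * Kpoly k - Kpoly m
  end.

(* The n x n matrix M_n, 0-indexed: (M_n)_{j,i} = 1 iff (1-indexed)
   i >= j-1, or (j,i) = (n, n-2); i.e. 0-indexed j <= i+1, or
   (j = n-1 and i = n-3). Row index j, column index i. *)
Definition Mmat (n : nat) : 'M[algC]_n :=
  \matrix_(j < n, i < n)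
    (if ((j <= i.+1)%N || ((nat_of_ord j == n.-1)%N && (nat_of_ord i == n - 3)%N)) then 1 else 0).

Definition calK (n : nat) : {poly algC} := char_poly (Mmat n).

(* Main.v *)
Require Import Defs.
From HB Require Import structures.
From mathcomp Require Import all_boot all_order all_algebra all_field.
From mathcomp Require Import ring lra zify.
Import Order.TTheory GRing.Theory Num.Theory.
Local Open Scope ring_scope.

Lemma Kpoly4 m : Kpoly m.+4 = ('X - 2%:P) * Kpoly m.+2 - Kpoly m.
Proof. by []. Qed.

Definition Kstep n := Kpoly n.+2 =
  (if odd n then Kpoly n.+1 - Kpoly n else 'X * Kpoly n.+1 - Kpoly n).

Lemma Kstep_all n : Kstep n.
Proof.
suff H : Kstep n /\ Kstep n.+1 by case: H.
elim: n => [|n [IH1 IH2]].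
  split; rewrite /Kstep /=.
    by rewrite mulr1 rmorphD /=; ring.
  by rewrite rmorphD /=; ring.
split=> //; move: IH1 IH2; rewrite /Kstep Kpoly4 /=.
case: (odd n) => /= -> ->; rewrite ?rmorphD /=; ring.
Qed.

Definition cf (z : algC) n := if odd n then 1 + z else 1.

Lemma Keval (z : algC) n : z != 0 ->
  z ^+ n./2 * cf z n * (Kpoly n).[2 + z + z^-1] = z ^+ n + 1.
Proof.
move=> z0; elim/ltn_ind: n => n IH.
case: n IH => [|[|[|[|k]]]] IH.
1-4: by rewrite /cf /= !hornerE /= ?expr0 ?expr1 ?exprS ?expr0; field.
have IH1 := IH k ltac:(lia); have IH2 := IH k.+2 ltac:(lia).
rewrite Kpoly4 hornerD hornerN hornerM !hornerE.
have -> : cf z k.+4 = cf z k by rewrite /cf /= !negbK.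
have E : cf z k.+2 = cf z k by rewrite /cf /= !negbK.
move: IH2 IH1; rewrite E; set c := cf z k; set a := (Kpoly k.+2).[_]; set b := (Kpoly k).[_].
move=> IH2 IH1.
have -> : z ^+ (k./2).+2 * c * ((2 + z + z^-1 - 2) * a - b)
   = (z ^+ 2 + 1) * (z ^+ (k./2).+1 * c * a) - z^+2 * (z ^+ k./2 * c * b).
  rewrite !exprS; field; exact: z0.
rewrite IH2 IH1 !exprS; ring.
Qed.

Lemma Ksize n : size (Kpoly n) = (n./2).+1 /\ ((2 <= n)%N -> Kpoly n \is monic).
Proof.
elim/ltn_ind: n => n IH.
case: n IH => [|[|[|[|k]]]] IH.
- by rewrite /= size_polyC pnatr_eq0.
- by rewrite /= size_poly1.
- by rewrite /= size_XsubC monicXsubC.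
- by rewrite /= size_XsubC monicXsubC.
have [s2 m2] := IH k.+2 ltac:(lia); have [s0 _] := IH k ltac:(lia).
have m2' := m2 isT.
have nz2 : Kpoly k.+2 != 0 by apply: monic_neq0.
have sM : size (('X - 2%:P) * Kpoly k.+2) = (k./2).+3.
  by rewrite size_monicM ?monicXsubC // size_XsubC s2.
rewrite Kpoly4 size_polyDl ?size_polyN ?sM ?s0 //; split => // _.
apply/monicP; rewrite lead_coefDl ?size_polyN ?sM ?s0 //.
by rewrite lead_coefM (eqP (monicXsubC _)) (eqP m2') mulr1.
Qed.

Lemma unit_inv (z : algC) N : (0 < N)%N -> z ^+ N = 1 -> z^-1 = z^*.
Proof.
move=> N0 zN.
have n1 : `|z| = 1.
  apply/eqP; rewrite -(pexpr_eq1 N0 (normr_ge0 z)) -normrX zN normr1 //.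
by rewrite invC_norm n1 expr1n invr1 mul1r.
Qed.

Lemma lam_props (z : algC) N : (0 < N)%N -> z ^+ N = 1 -> z != 1 -> z != -1 ->
  (2 + z + z^-1) \is Num.real /\ 0 < 2 + z + z^-1 /\ 2 + z + z^-1 < 4.
Proof.
move=> N0 zN z1 zm1.
have zi := @unit_inv z N N0 zN.
have z0 : z != 0.
  apply/eqP => E; move: zN; rewrite E expr0n (gtn_eqF N0) /= => /eqP; by rewrite eq_sym oner_eq0.
have zz : z * z^* = 1 by rewrite -zi divff.
have E1 : 2 + z + z^-1 = (1 + z) * (1 + z)^*.
  rewrite rmorphD rmorph1 zi; rewrite mulrDr !mulrDl zz !mul1r mulr1; ring.
have E2 : 4 - (2 + z + z^-1) = (1 - z) * (1 - z)^*.
  rewrite rmorphB rmorph1 zi; rewrite mulrBr !mulrBl zz !mul1r mulr1; ring.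
have p1 : 0 < 2 + z + z^-1.
  by rewrite E1 mul_conjC_gt0 addrC addr_eq0.
split; first exact: gtr0_real.
split=> //; rewrite -subr_gt0 E2 mul_conjC_gt0 subr_eq0 eq_sym //.
Qed.

Lemma Kfactor n : (2 <= n)%N -> exists s : seq algC,
  [/\ uniq s, size s = n./2, Kpoly n = \prod_(x <- s) ('X - x%:P)
    & forall x, x \in s -> x \is Num.real /\ 0 < x /\ x < 4].
Proof.
move=> n2.
have hh := odd_double_half n.
have N0 : (0 < n.*2)%N by lia.
have [w pw] := C_prim_root_exists N0.
have wN := prim_expr_order pw.
have wn : w ^+ n = -1.
  have : (w ^+ n) ^+ 2 = 1 by rewrite -exprM muln2.
  move/eqP; rewrite sqrf_eq1 => /orP[|/eqP //].
  rewrite -(prim_order_dvd pw) => /dvdn_leq; lia.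
pose zz k := w ^+ k.*2.+1.
pose lam k := 2 + zz k + (zz k)^-1.
have zzN k : zz k ^+ n.*2 = 1 by rewrite /zz -exprM mulnC exprM wN expr1n.
have zz1 k : (k < n./2)%N -> zz k != 1.
  move=> kn; rewrite /zz -(prim_order_dvd pw); apply/negP => /dvdn_leq; lia.
have zzm1 k : (k < n./2)%N -> zz k != -1.
  move=> kn; rewrite /zz -wn (eq_prim_root_expr pw) !modn_small; lia.
have zz0 k : zz k != 0.
  apply/eqP => E; move: (zzN k); rewrite E expr0n (gtn_eqF N0) /= => /eqP; by rewrite eq_sym oner_eq0.
have lamP k : (k < n./2)%N -> lam k \is Num.real /\ 0 < lam k /\ lam k < 4.
  by move=> kn; exact: (@lam_props (zz k) n.*2 N0 (zzN k) (zz1 k kn) (zzm1 k kn)).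
have lamR k : (k < n./2)%N -> root (Kpoly n) (lam k).
  move=> kn; have := @Keval (zz k) n (zz0 k).
  have -> : zz k ^+ n = -1.
    by rewrite /zz -exprM mulnC exprM wn -signr_odd /= odd_double.
  rewrite addNr => /eqP; rewrite !mulf_eq0 expf_eq0 (negbTE (zz0 k)) andbF /=.
  have -> : (cf (zz k) n == 0) = false.
    rewrite /cf; case: (odd n); last by rewrite oner_eq0.
    by rewrite addrC addr_eq0 (negbTE (zzm1 k kn)).
  done.
have lam_inj : {in iota 0 n./2 &, injective lam}.
  move=> j k; rewrite !mem_iota /= !add0n => jn kn E.
  have zj := zz0 j; have zk := zz0 k.
  have : (zz j - zz k) * (zz j * zz k - 1) == 0.
    apply/eqP; move: E; rewrite /lam => E.
    have : zz j * zz k * (2 + zz j + (zz j)^-1) = zz j * zz k * (2 + zz k + (zz k)^-1) by rewrite E.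
    move=> E2.
    have -> : (zz j - zz k) * (zz j * zz k - 1) = zz j * zz k * (2 + zz j + (zz j)^-1) - zz j * zz k * (2 + zz k + (zz k)^-1).
      by field; apply/andP.
    by rewrite E2 subrr.
  rewrite mulf_eq0 !subr_eq0 => /orP[|].
    rewrite /zz (eq_prim_root_expr pw) !modn_small; lia.
  rewrite /zz -exprD -(prim_order_dvd pw) => /dvdn_leq; lia.
pose s := map lam (iota 0 n./2).
have sP x : x \in s -> exists2 k, (k < n./2)%N & x = lam k.
  by case/mapP => k; rewrite mem_iota add0n => /andP[_ kn] ->; exists k.
have us : uniq s by rewrite map_inj_in_uniq ?iota_uniq.
exists s; split => //; first by rewrite size_map size_iota.
  have [q Hq] : exists q, Kpoly n = q * \prod_(z <- s) ('X - z%:P).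
    apply: uniq_roots_prod_XsubC; last by rewrite uniq_rootsE.
    by apply/allP => x /sP [k kn ->]; apply: lamR.
  have [sK mK] := Ksize n; have mK' := mK n2.
  have Pm : \prod_(z <- s) ('X - z%:P) \is monic by apply: monic_prod_XsubC.
  have q0 : q != 0.
    by apply/eqP => q0; move: (monic_neq0 mK'); rewrite Hq q0 mul0r eqxx.
  have sq : size q = 1%N.
    move: sK; have sPs : size (\prod_(z <- s) ('X - z%:P)) = (size s).+1 by exact: (size_prod_XsubC s id).
    rewrite Hq (size_mul q0 (monic_neq0 Pm)) (size_prod_XsubC _ (fun z => z)) size_map size_iota.
    have H1 : (0 < size q)%N by rewrite size_poly_gt0. move=> E; have E2 : (size q + n./2.+1).-1 = n./2.+1 := E; lia.
  have Eq := size1_polyC (eq_leq sq).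
  move: mK'; rewrite Hq Eq => /monicP; rewrite lead_coefM (eqP Pm) mulr1 lead_coefC => ->.
  by rewrite mul1r.
by move=> x /sP [k kn ->]; apply: lamP.
Qed.

Section Gen.
Variable R : comRingType.

Definition mk n (f : nat -> nat -> R) : 'M[R]_n := \matrix_(i < n, j < n) f i j.

Lemma det2 (f : nat -> nat -> R) : \det (mk 2 f) = f 0 0 * f 1 1 - f 1 0 * f 0 1.
Proof.
rewrite (expand_det_col _ 0) !big_ord_recl big_ord0 /cofactor !det_mx11 !mxE /=.
rewrite addr0 expr0 expr1 !mul1r; ring.
Qed.

Lemma minor_mk n f (i j : 'I_n.+1) :
  row' i (col' j (mk n.+1 f)) = mk n (fun a b => f (bump i a) (bump j b)).
Proof. by apply/matrixP => a b; rewrite !mxE. Qed.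

Lemma det3 (f : nat -> nat -> R) : \det (mk 3 f) =
  f 0 0 * (f 1 1 * f 2 2 - f 2 1 * f 1 2)
  - f 1 0 * (f 0 1 * f 2 2 - f 2 1 * f 0 2)
  + f 2 0 * (f 0 1 * f 1 2 - f 1 1 * f 0 2).
Proof.
rewrite (expand_det_col _ 0) !big_ord_recl big_ord0 /cofactor !minor_mk !det2 !mxE /=.
rewrite /bump /=; ring.
Qed.

Lemma L1 k (f : nat -> nat -> R) : (forall i, (2 <= i < k.+2)%N -> f i 0 = 0) ->
  \det (mk k.+2 f) = f 0 0 * \det (mk k.+1 (fun a b => f a.+1 b.+1))
     - f 1 0 * \det (mk k.+1 (fun a b => f (bump 1 a) b.+1)).
Proof.
move=> H; rewrite (expand_det_col _ 0) !big_ord_recl big1; last first.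
  move=> i _; rewrite mxE /= /bump !leq0n /= H ?mul0r //; have := ltn_ord i; lia.
rewrite /cofactor !minor_mk !mxE /= addr0 expr0 expr1 !mul1r.
have -> : (fun a b : nat => f (bump 0 a) (bump 0 b)) = (fun a b => f a.+1 b.+1) by [].
have -> : (fun a b : nat => f (bump 1 a) (bump 0 b)) = (fun a b => f (bump 1 a) b.+1) by [].
ring.
Qed.

Lemma L2 k (g h : nat -> nat -> R) :
  (forall i j, (1 <= i < k.+1)%N -> (j < k.+1)%N -> g i j = h i j) ->
  \det (mk k.+1 g) = \det (mk k.+1 h)
     + \det (mk k.+1 (fun i j => if i == 0%N then g 0 j - h 0 j else g i j)).
Proof.
move=> H; rewrite (@determinant_multilinear _ _ _ (mk k.+1 h)
  (mk k.+1 (fun i j => if i == 0%N then g 0 j - h 0 j else g i j)) 0 1 1) ?mul1r //.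
- by apply/rowP => j; rewrite !mxE /=; ring.
- apply/matrixP => a b; rewrite !mxE /= /bump leq0n /= H //; have Ha : (@nat_of_ord k a < k)%N := ltn_ord a; lia.
- by apply/matrixP => a b; rewrite !mxE.
Qed.

Lemma L3 k (g : nat -> nat -> R) : (forall j, (1 <= j < k.+1)%N -> g 0 j = 0) ->
  \det (mk k.+1 g) = g 0 0 * \det (mk k (fun a b => g a.+1 b.+1)).
Proof.
move=> H; rewrite (expand_det_row _ 0) big_ord_recl big1; last first.
  move=> i _; rewrite mxE /= /bump !leq0n /= H ?mul0r //; have := ltn_ord i; lia.
by rewrite /cofactor minor_mk !mxE /= addr0 expr0 mul1r.
Qed.
End Gen.
Arguments mk {R} n f.
Arguments L1 {R} k f.
Arguments L2 {R} k g h.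
Arguments L3 {R} k g.
Arguments det3 {R} f.
Arguments det2 {R} f.

Lemma mk_ext (R : comRingType) n (f g : nat -> nat -> R) :
  (forall i j, (i < n)%N -> (j < n)%N -> f i j = g i j) -> mk n f = mk n g.
Proof. by move=> H; apply/matrixP => i j; rewrite !mxE H. Qed.

Definition aent n i j : {poly algC} := (if i == j then 'X else 0) -
  (if ((i <= j.+1) || ((i == n.-1) && (j == n - 3)))%N then 1 else 0)%:P.

Lemma a_shift n i j : aent n.+1 i.+1 j.+1 = aent n i j.
Proof.
rewrite /aent /= eqSS; congr (_ - (_)%:P); congr (if _ then _ else _).
rewrite ltnS; have [h|h] := leqP i j.+1; first by [].
rewrite /=; apply/idP/idP => /andP[/eqP h1 /eqP h2]; apply/andP; split; apply/eqP; lia.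
Qed.

Lemma charE n : char_poly_mx (Mmat n) = mk n (aent n).
Proof.
apply/matrixP => i j; rewrite /char_poly_mx /Mmat !mxE /aent; congr (_ - _).
have [/val_inj ->|ne] := eqVneq (i : nat) j; first by rewrite !eqxx.
rewrite (_ : (i == j) = false) //; apply/negbTE/eqP => E; move: ne; by rewrite E eqxx.
Qed.

Definition cdet n := \det (mk n (aent n)).

Lemma crec k : (2 <= k)%N -> cdet k.+2 = 'X * cdet k.+1 - 'X * cdet k.
Proof.
move=> k2; rewrite /cdet (L1 k); last first.
  move=> i /andP[i2 ik]; rewrite /aent.
  have -> : (i == 0)%N = false by lia.
  have -> : (i <= 1)%N = false by lia.
  have -> : (0 == k.+2 - 3)%N = false by lia.
  by rewrite andbF /= subr0.
have -> : mk k.+1 (fun a0 b : nat => aent k.+2 a0.+1 b.+1) = mk k.+1 (aent k.+1).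
  by apply: mk_ext => i j _ _; exact: a_shift.
set h := fun a0 b : nat => aent k.+2 (bump 1 a0) b.+1.
rewrite (L2 k (aent k.+1) h); last first.
  move=> i j /andP[i1 _] _; rewrite /h /bump.
  case: i i1 => // i _; exact: (esym (a_shift _ _ _)).
rewrite (L3 k (fun i j => if i == 0%N then aent k.+1 0 j - h 0 j else aent k.+1 i j)); last first.
  move=> j /andP[j1 _]; rewrite /h /=; case: j j1 => // j _.
  by rewrite /aent /= subrr.
have -> : mk k (fun a0 b : nat => if a0.+1 == 0%N then aent k.+1 0 b.+1 - h 0 b.+1 else aent k.+1 a0.+1 b.+1) = mk k (aent k).
  by apply: mk_ext => i j _ _; exact: a_shift.
have e1 : aent k.+2 0 0 = 'X - 1 by rewrite /aent /= polyC1.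
have e2 : aent k.+2 1 0 = - 1 by rewrite /aent /= polyC1 sub0r.
rewrite e1 e2 /=; have e3 : aent k.+1 0 0 - h 0 0 = 'X.
  by rewrite /h /aent /= polyC1 sub0r opprK subrK.
rewrite e3; move: (\det (mk k.+1 h)) (\det (mk k (aent k))) => x y; ring.
Qed.

Lemma calKE n : calK n = cdet n.
Proof. by rewrite /calK /char_poly charE. Qed.

Lemma cdetK n : (2 <= n)%N -> cdet n = 'X ^+ (n.+1)./2 * Kpoly n.
Proof.
elim/ltn_ind: n => n IH.
case: n IH => [|[|[|[|k]]]] IH // _.
- rewrite /cdet det2 /aent /= !polyC_natr expr1.
  move: ('X : {poly algC}) => x; ring.
- rewrite /cdet det3 /aent /= !polyC_natr.
  move: ('X : {poly algC}) => x; ring.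
rewrite crec // (IH k.+3) // (IH k.+2) // (Kstep_all k.+2).
have -> : odd k.+2 = odd k by rewrite /= negbK.
rewrite (_ : (k.+4.+1)./2 = ((k.+1)./2).+2) // (_ : (k.+4)./2 = (k./2).+2) //.
rewrite (_ : (k.+3)./2 = ((k.+1)./2).+1) //.
have hk : (k.+1)./2 = (odd k + k./2)%N by rewrite -uphalf_half.
rewrite hk; move: (Kpoly k.+3) (Kpoly k.+2) => p q.
case: (odd k) => /=; rewrite ?add0n ?add1n !exprS;
  set r := (_ ^+ k./2); clearbody r; move: ('X : {poly algC}) => x; ring.
Qed.

Lemma Kroot_props n z : root (Kpoly n) z -> z \is Num.real /\ 0 < z /\ z < 4.
Proof.
case: n => [|[|n]].
- by rewrite /= rootC pnatr_eq0.
- by move=> h; move: (root1 z); rewrite h.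
have [s [us ss Ks sP]] := Kfactor n.+2 isT.
by rewrite Ks root_prod_XsubC => /sP.
Qed.

Lemma rootXn (u : nat) (z : algC) : (0 < u)%N -> root ('X^u) z = (z == 0).
Proof. by move=> u0; rewrite /root hornerXn expf_eq0 u0. Qed.

Lemma mupXn (u : nat) (z : algC) : mup z ('X^u) = if z == 0 then u else 0%N.
Proof.
have -> : ('X^u : {poly algC}) = ('X - 0%:P) ^+ u by rewrite polyC0 subr0.
by rewrite mup_XsubCX eq_sym.
Qed.

Theorem theorem3 :
  (forall (n : nat) (z : algC), root (Kpoly n) z ->
      z \is Num.real /\ 0 < z /\ z < 4)
  /\
  (forall n : nat, (3 <= n)%N ->
      (forall z : algC, root (calK n) z ->
          z \is Num.real /\ 0 <= z /\ z < 4)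
   /\ mup 0 (calK n) = (n.+1)./2
   /\ (exists s : seq algC,
         [/\ uniq s, size s = n./2
           & forall z : algC, (z \in s) = (z != 0) && root (calK n) z])
   /\ (forall z : algC, z != 0 -> root (calK n) z -> mup z (calK n) = 1%N)).
Proof.
split; first exact: Kroot_props.
move=> n n3.
have [s [us ss Ks sP]] := Kfactor n (ltnW n3).
have u0 : (0 < (n.+1)./2)%N by have := odd_double_half n.+1; lia.
have E : calK n = 'X^((n.+1)./2) * \prod_(x <- s) ('X - x%:P) by rewrite calKE cdetK ?Ks // ltnW.
have rE z : root (calK n) z = (z == 0) || (z \in s) by rewrite E rootM rootXn // root_prod_XsubC.
have s0 : 0 \notin s by apply/negP => /sP [_ [/eqP]]; rewrite ltxx.
have nzX : ('X^((n.+1)./2) : {poly algC}) != 0 by rewrite monic_neq0 ?monicXn.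
have nzP : \prod_(x <- s) ('X - x%:P) != 0 by rewrite monic_neq0 ?monic_prod_XsubC.
split.
  move=> z; rewrite rE => /orP[/eqP ->|/sP [? [? ?]]]; last by split => //; split => //; apply: ltW.
  by split; [exact: real0 | split; [exact: lexx | exact: ltr0n]].
split.
  by rewrite E mupM // mupXn eqxx mu_prod_XsubC (count_memPn s0) addn0.
split.
  exists s; split => // z; rewrite rE.
  case: (eqVneq z 0) => [->|] /=; first by rewrite (negbTE s0).
  by [].
move=> z z0 rz; rewrite E mupM // mupXn (negbTE z0) mu_prod_XsubC add0n count_uniq_mem //.
by move: rz; rewrite rE (negbTE z0) /= => ->.
Qed.
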